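(* $|\mathsf{Agg}|=2^{\mathfrak{c}}$, where $\mathfrak{c}=2^{\aleph_0}$.
   Context: An $n$-ary aggregation function on $[0,1]$ is a function $f\colon[0,1]^n\to[0,1]$ nondecreasing in each coordinate with $f(0,\dots,0)=0$ and $f(1,\dots,1)=1$; $\mathsf{Agg}$ is the set of all aggregation functions of all finite arities $n\in\mathbb{N}$. *)

(* Defs.v *)
From Stdlib Require Import Reals.
Open Scope R_scope.

Definition I01 : Type := {x : R | 0 <= x <= 1}.

Definition Idx (n : nat) : Type := {i : nat | (i < n)%nat}.

Definition cube (n : nat) : Type := Idx n -> I01.

Definition cst (n : nat) (c : I01) : cube n := fun _ => c.

Lemma zero_in01 : 0 <= 0 <= 1.
Proof. split; [apply Rle_refl | apply Rle_0_1]. Qed.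
Lemma one_in01 : 0 <= 1 <= 1.
Proof. split; [apply Rle_0_1 | apply Rle_refl]. Qed.

Definition I0 : I01 := exist _ 0 zero_in01.
Definition I1 : I01 := exist _ 1 one_in01.

Definition is_agg (n : nat) (f : cube n -> I01) : Prop :=
  (forall x y : cube n,
      (forall i, proj1_sig (x i) <= proj1_sig (y i)) ->
      proj1_sig (f x) <= proj1_sig (f y)) /\
  f (cst n I0) = I0 /\ f (cst n I1) = I1.

Definition Agg : Type := {n : nat & {f : cube n -> I01 | is_agg n f}}.

(* Main.v *)
Require Import Defs.
From Stdlib Require Import Reals.
From Stdlib Require Import Lra Lia ClassicalEpsilon Classical ProofIrrelevance
  FunctionalExtensionality Cantor Eqdep_dec Compare_dec.

Open Scope R_scope.

Fixpoint Cn {A B : Type} (f : A -> B) (g : B -> A) (n : nat) (a : A) : Prop :=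
  match n with
  | O => ~ (exists b, g b = a)
  | S k => exists a', Cn f g k a' /\ a = g (f a')
  end.

Definition ginv {A B : Type} (f : A -> B) (g : B -> A) (a : A) : B :=
  match excluded_middle_informative (exists b, g b = a) with
  | left H => proj1_sig (constructive_indefinite_description _ H)
  | right _ => f a
  end.

Lemma ginv_spec {A B : Type} (f : A -> B) (g : B -> A) a :
  (exists b, g b = a) -> g (ginv f g a) = a.
Proof.
  intro H. unfold ginv. destruct (excluded_middle_informative _) as [H'|H'].
  - destruct (constructive_indefinite_description _ H'); simpl; auto.
  - contradiction.
Qed.

Definition hcsb {A B : Type} (f : A -> B) (g : B -> A) (a : A) : B :=
  if excluded_middle_informative (exists n, Cn f g n a) then f a else ginv f g a.

Lemma csb (A B : Type) (f : A -> B) (g : B -> A) :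
  (forall a a', f a = f a' -> a = a') -> (forall b b', g b = g b' -> b = b') ->
  exists h : A -> B, (forall a a', h a = h a' -> a = a') /\ (forall b, exists a, h a = b).
Proof.
  intros fi gi. exists (hcsb f g). split.
  - intros a a'. unfold hcsb.
    destruct (excluded_middle_informative (exists n, Cn f g n a)) as [Ha|Ha];
    destruct (excluded_middle_informative (exists n, Cn f g n a')) as [Ha'|Ha'].
    + apply fi.
    + intro E. exfalso. apply Ha'. destruct Ha as [n Hn].
      assert (Hg : exists b, g b = a').
      { apply NNPP. intro C. apply Ha'. exists O. exact C. }
      pose proof (ginv_spec f g a' Hg) as G. rewrite <- E in G.
      exists (S n). simpl. exists a. split; auto.
    + intro E. exfalso. apply Ha. destruct Ha' as [n Hn].
      assert (Hg : exists b, g b = a).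
      { apply NNPP. intro C. apply Ha. exists O. exact C. }
      pose proof (ginv_spec f g a Hg) as G. rewrite E in G.
      exists (S n). simpl. exists a'. split; auto.
    + intro E.
      assert (Hg : exists b, g b = a).
      { apply NNPP. intro C. apply Ha. exists O. exact C. }
      assert (Hg' : exists b, g b = a').
      { apply NNPP. intro C. apply Ha'. exists O. exact C. }
      rewrite <- (ginv_spec f g a Hg), <- (ginv_spec f g a' Hg'), E. reflexivity.
  - intro b. destruct (classic (exists n, Cn f g n (g b))) as [[n Hn]|Hn].
    + destruct n as [|n].
      * simpl in Hn. exfalso. apply Hn. exists b. auto.
      * simpl in Hn. destruct Hn as [a' [Ha' E]]. exists a'. unfold hcsb.
        destruct (excluded_middle_informative _) as [_|C].
        -- symmetry. apply gi. auto.
        -- exfalso. apply C. exists n. auto.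
    + exists (g b). unfold hcsb.
      destruct (excluded_middle_informative _) as [C|_].
      * contradiction.
      * apply gi. apply ginv_spec. exists b. auto.
Qed.

Definition gq (r : R) : R := r / (1 + Rabs r).

Lemma gq_bound r : -1 < gq r < 1.
Proof.
  unfold gq. assert (H : 0 < 1 + Rabs r) by (pose proof (Rabs_pos r); lra).
  set (q := r / (1 + Rabs r)). assert (Hq : r = q * (1 + Rabs r)) by (unfold q; field; lra).
  destruct (Rcase_abs r) as [h|h]; [rewrite Rabs_left in * by lra | rewrite Rabs_right in * by lra];
  split; nra.
Qed.

Lemma gq_inj a b : gq a = gq b -> a = b.
Proof.
  unfold gq. intro E.
  assert (Ha : 0 < 1 + Rabs a) by (pose proof (Rabs_pos a); lra).
  assert (Hb : 0 < 1 + Rabs b) by (pose proof (Rabs_pos b); lra).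
  assert (E2 : a * (1 + Rabs b) = b * (1 + Rabs a)).
  { apply (f_equal (fun t => t * (1 + Rabs a) * (1 + Rabs b))) in E.
    field_simplify in E; lra. }
  destruct (Rcase_abs a) as [h|h]; [rewrite (Rabs_left a) in E2 by lra | rewrite (Rabs_right a) in E2 by lra];
  destruct (Rcase_abs b) as [h'|h']; [rewrite (Rabs_left b) in E2 by lra | rewrite (Rabs_right b) in E2 by lra | rewrite (Rabs_left b) in E2 by lra | rewrite (Rabs_right b) in E2 by lra].
  - nra.
  - nra.
  - nra.
  - nra.
Qed.

Definition psi (r : R) : R := (1 + gq r) / 2.

Lemma psi_in r : 0 <= psi r <= 1.
Proof. unfold psi; pose proof (gq_bound r); lra. Qed.
Lemma psi_in' r : 0 <= 1 - psi r <= 1.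
Proof. unfold psi; pose proof (gq_bound r); lra. Qed.

Lemma psi_inj a b : psi a = psi b -> a = b.
Proof. unfold psi; intro; apply gq_inj; lra. Qed.

Lemma lt02 : (0 < 2)%nat. Proof. lia. Qed.
Lemma lt12 : (1 < 2)%nat. Proof. lia. Qed.
Definition i0 : Idx 2 := exist _ 0%nat lt02.
Definition i1 : Idx 2 := exist _ 1%nat lt12.

Definition fS (S : R -> bool) (x : cube 2) : I01 :=
  let x0 := proj1_sig (x i0) in
  let u := x0 + proj1_sig (x i1) in
  if Rlt_dec u 1 then I0 else if Rlt_dec 1 u then I1 else
  if excluded_middle_informative (exists r, psi r = x0 /\ S r = true) then I1 else I0.

Lemma fS_agg S : is_agg 2 (fS S).
Proof.
  split; [|split].
  - intros x y Hxy. pose proof (Hxy i0). pose proof (Hxy i1). unfold fS.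
    repeat match goal with |- context [Rlt_dec ?a ?b] => destruct (Rlt_dec a b) end;
    repeat match goal with |- context [excluded_middle_informative ?p] =>
      destruct (excluded_middle_informative p) end; simpl; try lra.
    exfalso. destruct e as [r [h1 h2]]. apply n3. exists r. split; [lra|auto].
  - unfold fS, cst; simpl. destruct (Rlt_dec _ _); [reflexivity|lra].
  - unfold fS, cst; simpl. destruct (Rlt_dec _ _); [lra|].
    destruct (Rlt_dec _ _); [reflexivity|lra].
Qed.

Definition Dm (S : R -> bool) : Agg := existT _ 2%nat (exist _ (fS S) (fS_agg S)).

Definition pt (r : R) : cube 2 := fun i =>
  match proj1_sig i with O => exist _ (psi r) (psi_in r) | _ => exist _ (1 - psi r) (psi_in' r) end.

Lemma fS_pt S r : fS S (pt r) = if S r then I1 else I0.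
Proof.
  unfold fS, pt; simpl.
  destruct (Rlt_dec _ _); [lra|]. destruct (Rlt_dec _ _); [lra|].
  destruct (excluded_middle_informative _) as [[r' [h1 h2]]|h].
  - apply psi_inj in h1. subst. rewrite h2. reflexivity.
  - destruct (S r) eqn:E; auto. exfalso. apply h. exists r. auto.
Qed.

Lemma Dm_inj S T : Dm S = Dm T -> S = T.
Proof.
  intro H. unfold Dm in H. apply inj_pair2_eq_dec in H; [|exact Nat.eq_dec].
  apply (f_equal (@proj1_sig _ _)) in H. simpl in H.
  extensionality r. pose proof (f_equal (fun F => F (pt r)) H) as H'. simpl in H'.
  rewrite !fS_pt in H'.
  destruct (S r), (T r); auto; apply (f_equal (@proj1_sig _ _)) in H'; simpl in H'; lra.
Qed.

Definition dq (m : nat) : R :=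
  let (a, r) := Cantor.of_nat m in let (b, d) := Cantor.of_nat r in (INR a - INR b) / INR (S d).

Definition cut (r : R) (m : nat) : bool := if Rlt_dec (dq m) r then true else false.

Lemma dq_hit a b d : dq (Cantor.to_nat (a, Cantor.to_nat (b, d))) = (INR a - INR b) / INR (S d).
Proof. unfold dq. rewrite Cantor.cancel_of_to. rewrite Cantor.cancel_of_to. reflexivity. Qed.

Lemma IZR_split z : IZR z = INR (Z.to_nat z) - INR (Z.to_nat (- z)).
Proof. rewrite !INR_IZR_INZ, <- minus_IZR. f_equal. lia. Qed.

Lemma dense x y : x < y -> exists a b d, x <= (INR a - INR b) / INR (S d) < y.
Proof.
  intro H. destruct (archimed_cor1 (y - x)) as [N [HN HN0]]; [lra|].
  destruct (archimed (x * INR N)) as [H1 H2].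
  set (z := up (x * INR N)) in *.
  exists (Z.to_nat z), (Z.to_nat (- z)), (pred N).
  replace (S (pred N)) with N by lia. rewrite <- IZR_split.
  assert (HNp : 0 < INR N) by (apply lt_0_INR; lia).
  set (q := IZR z / INR N). assert (Hq : IZR z = q * INR N) by (unfold q; field; lra).
  set (w := / INR N) in *. assert (Hw : w * INR N = 1) by (unfold w; field; lra).
  split; nra.
Qed.

Lemma cut_inj r r' : cut r = cut r' -> r = r'.
Proof.
  intro H. destruct (Rtotal_order r r') as [h|[h|h]]; auto; exfalso.
  - destruct (dense r r' h) as [a [b [d Hd]]].
    apply (f_equal (fun c => c (Cantor.to_nat (a, Cantor.to_nat (b, d))))) in H.
    unfold cut in H. rewrite dq_hit in H.
    destruct (Rlt_dec _ r); destruct (Rlt_dec _ r'); try discriminate; lra.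
  - destruct (dense r' r h) as [a [b [d Hd]]].
    apply (f_equal (fun c => c (Cantor.to_nat (a, Cantor.to_nat (b, d))))) in H.
    unfold cut in H. rewrite dq_hit in H.
    destruct (Rlt_dec _ r); destruct (Rlt_dec _ r'); try discriminate; lra.
Qed.

Definition enc (n : nat) (x : cube n) (y : R) : nat -> bool := fun k =>
  let (i, m) := Cantor.of_nat k in
  match i with
  | O => Nat.eqb m n
  | 1%nat => cut y m
  | S (S j) => match lt_dec j n with
               | left h => cut (proj1_sig (x (exist _ j h))) m
               | right _ => false end
  end.

Lemma I01_eq (u v : I01) : proj1_sig u = proj1_sig v -> u = v.
Proof. destruct u, v; simpl; intros ->; f_equal; apply proof_irrelevance. Qed.

Lemma enc_n n n' x x' y y' : enc n x y = enc n' x' y' -> n = n'.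
Proof.
  intro H. apply (f_equal (fun c => c (Cantor.to_nat (O, n)))) in H.
  unfold enc in H. rewrite Cantor.cancel_of_to in H.
  rewrite Nat.eqb_refl in H. symmetry in H. apply Nat.eqb_eq in H. auto.
Qed.

Lemma enc_y n x x' y y' : enc n x y = enc n x' y' -> y = y'.
Proof.
  intro H. apply cut_inj. extensionality m.
  apply (f_equal (fun c => c (Cantor.to_nat (1%nat, m)))) in H.
  unfold enc in H. rewrite Cantor.cancel_of_to in H. exact H.
Qed.

Lemma enc_x n x x' y y' : enc n x y = enc n x' y' -> x = x'.
Proof.
  intro H. extensionality i. destruct i as [j hj]. apply I01_eq. apply cut_inj.
  extensionality m.
  apply (f_equal (fun c => c (Cantor.to_nat (S (S j), m)))) in H.
  unfold enc in H. rewrite Cantor.cancel_of_to in H.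
  destruct (lt_dec j n) as [h|h]; [|contradiction].
  assert (h = hj) by apply proof_irrelevance. subst. exact H.
Qed.

(* ternary injection of nat -> bool into R *)
Fixpoint P (s : nat -> bool) (n : nat) : R :=
  match n with
  | O => 0
  | S k => P s k + (if s k then 2 / 3 ^ (S k) else 0)
  end.

Lemma pow3_pos n : 0 < 3 ^ n.
Proof. apply pow_lt; lra. Qed.

Lemma P_le1 s n : P s n <= 1 - / 3 ^ n.
Proof.
  induction n as [|n IH]; simpl.
  - lra.
  - pose proof (pow3_pos n).
    replace (2 / (3 * 3 ^ n)) with (2/3 * / 3 ^ n) by (field; lra).
    replace (/ (3 * 3 ^ n)) with (/3 * / 3 ^ n) by (field; lra).
    assert (0 < / 3 ^ n) by (apply Rinv_0_lt_compat; lra).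
    destruct (s n); lra.
Qed.

Lemma P_tail s k d : P s (k + d) <= P s k + / 3 ^ k - / 3 ^ (k + d).
Proof.
  induction d as [|d IH].
  - rewrite Nat.add_0_r. lra.
  - rewrite Nat.add_succ_r. simpl. pose proof (pow3_pos (k + d)).
    replace (2 / (3 * 3 ^ (k + d))) with (2/3 * / 3 ^ (k + d)) by (field; lra).
    replace (/ (3 * 3 ^ (k + d))) with (/3 * / 3 ^ (k + d)) by (field; lra).
    assert (0 < / 3 ^ (k + d)) by (apply Rinv_0_lt_compat; lra).
    destruct (s (k + d)%nat); lra.
Qed.

Lemma P_mono s k d : P s k <= P s (k + d).
Proof.
  induction d as [|d IH].
  - rewrite Nat.add_0_r. lra.
  - rewrite Nat.add_succ_r. simpl. pose proof (pow3_pos (k + d)).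
    assert (0 < 2 / (3 * 3 ^ (k + d))) by (apply Rdiv_lt_0_compat; lra).
    destruct (s (k + d)%nat); lra.
Qed.

Lemma P_agree s t k : (forall j, (j < k)%nat -> s j = t j) -> P s k = P t k.
Proof.
  induction k as [|k IH]; intro H; simpl; auto.
  rewrite IH by (intros; apply H; lia). rewrite (H k) by lia. reflexivity.
Qed.

Lemma tern_ex s : { m : R | is_lub (fun z => exists n, z = P s n) m }.
Proof.
  apply completeness.
  - exists 1. intros z [n ->]. pose proof (P_le1 s n). pose proof (pow3_pos n).
    assert (0 < / 3 ^ n) by (apply Rinv_0_lt_compat; lra). lra.
  - exists (P s 0). exists O. reflexivity.
Qed.

Definition tern s : R := proj1_sig (tern_ex s).

Lemma tern_spec s : is_lub (fun z => exists n, z = P s n) (tern s).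
Proof. unfold tern. destruct (tern_ex s). simpl. auto. Qed.

Lemma least (Q : nat -> Prop) : (exists n, Q n) -> exists n, Q n /\ forall j, (j < n)%nat -> ~ Q j.
Proof.
  intros [n Hn]. apply NNPP. intro H.
  assert (A : forall m j, (j <= m)%nat -> ~ Q j).
  { induction m as [|m IH].
    - intros j Hj HQ. assert (j = O) by lia. subst. apply H. exists O. split; auto.
      intros; lia.
    - intros j Hj HQ. destruct (Nat.eq_dec j (S m)).
      + subst. apply H. exists (S m). split; auto. intros j' Hj'. apply IH. lia.
      + apply (IH j); [lia|auto]. }
  apply (A n n); auto.
Qed.

Lemma key s t k : (forall j, (j < k)%nat -> s j = t j) -> s k = true -> t k = false ->
  tern t < tern s.
Proof.
  intros Hag Hs Ht.
  pose proof (P_agree s t k Hag) as Hp.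
  destruct (tern_spec s) as [Us _]. destruct (tern_spec t) as [_ Lt].
  assert (H1 : P s (S k) <= tern s) by (apply Us; exists (S k); auto).
  simpl in H1. rewrite Hs in H1.
  pose proof (pow3_pos k).
  assert (Ht2 : tern t <= P s k + / 3 ^ (S k)).
  { apply Lt. intros z [n ->].
    assert (HPt : P t (S k) = P s k) by (simpl; rewrite Ht; lra).
    assert (0 < / 3 ^ (S k)) by (apply Rinv_0_lt_compat; apply pow3_pos).
    destruct (le_lt_dec n (S k)) as [hn|hn].
    - replace (S k) with (n + (S k - n))%nat in HPt by lia.
      pose proof (P_mono t n (S k - n)). lra.
    - replace n with (S k + (n - S k))%nat by lia.
      pose proof (P_tail t (S k) (n - S k)).
      assert (0 < / 3 ^ (S k + (n - S k))) by (apply Rinv_0_lt_compat; apply pow3_pos).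
      lra. }
  simpl in Ht2.
  replace (2 / (3 * 3 ^ k)) with (2 * / (3 * 3 ^ k)) in H1 by (field; lra).
  assert (0 < / (3 * 3 ^ k)) by (apply Rinv_0_lt_compat; lra).
  lra.
Qed.

Lemma tern_inj s t : tern s = tern t -> s = t.
Proof.
  intro H. apply NNPP. intro Hne.
  assert (Ex : exists j, s j <> t j).
  { apply not_all_ex_not. intro A. apply Hne. extensionality j. auto. }
  destruct (least _ Ex) as [k [Hk Hl]].
  assert (Hag : forall j, (j < k)%nat -> s j = t j).
  { intros j hj. apply NNPP. apply Hl. auto. }
  destruct (s k) eqn:E1, (t k) eqn:E2; try congruence.
  - pose proof (key s t k Hag E1 E2). lra.
  - assert (Hag' : forall j, (j < k)%nat -> t j = s j) by (intros; symmetry; auto).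
    pose proof (key t s k Hag' E2 E1). lra.
Qed.

Definition Em (a : Agg) : R -> bool := fun r =>
  match a with existT _ n (exist _ f _) =>
    if excluded_middle_informative (exists x : cube n, tern (enc n x (proj1_sig (f x))) = r)
    then true else false end.

Lemma Em_inj a b : Em a = Em b -> a = b.
Proof.
  destruct a as [n [f hf]], b as [m [g hg]]. intro H.
  assert (K : forall x : cube n, exists x' : cube m,
             enc n x (proj1_sig (f x)) = enc m x' (proj1_sig (g x'))).
  { intro x. apply (f_equal (fun F => F (tern (enc n x (proj1_sig (f x)))))) in H.
    unfold Em in H.
    destruct (excluded_middle_informative _) as [_|C]; [|exfalso; apply C; exists x; auto].
    destruct (excluded_middle_informative _) as [[x' Hx']|_]; [|discriminate].
    exists x'. apply tern_inj. auto. }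
  destruct (K (cst n I0)) as [x0 Hx0]. pose proof (enc_n _ _ _ _ _ _ Hx0). subst m.
  assert (f = g).
  { extensionality x. destruct (K x) as [x' Hx'].
    pose proof (enc_x _ _ _ _ _ Hx'). subst x'.
    apply I01_eq. eapply enc_y. exact Hx'. }
  subst g. assert (hf = hg) by apply proof_irrelevance. subst. reflexivity.
Qed.

Theorem lemma6 :
  exists F : Agg -> (R -> bool),
    (forall a b : Agg, F a = F b -> a = b) /\
    (forall S : R -> bool, exists a : Agg, F a = S).
Proof.
  destruct (csb Agg (R -> bool) Em Dm Em_inj Dm_inj) as [h [hi hs]].
  exists h. split; auto.
Qed.
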